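(* In the setting of the context, with $S(t)=\tilde S e^{(\beta/\gamma)\tilde R}\varphi^{-1}(t)$ for $t\ge0$, we have \[ S(\infty):=\lim_{t\to\infty}S(t)=\tilde S e^{(\beta/\gamma)\tilde R}e^{-(\beta/\gamma)R(\infty)}, \] where $R(\infty):=\lim_{t\to\infty}\bigl(-\frac{\gamma}{\beta}\log\varphi^{-1}(t)\bigr)$, and $S$ is decreasing on $[0,\infty)$ with \[ \tilde S\ge S(t)>\tilde S e^{(\beta/\gamma)\tilde R}e^{-(\beta/\gamma)\alpha}=S(\infty)\quad(t\ge 0). \]
   Context: Let $\beta,\gamma,\delta>0$ be constants and $\tilde S,\tilde E,\tilde I,\tilde R$ real numbers with $N:=\tilde S+\tilde E+\tilde I+\tilde R>0$. Standing assumptions: (A1) $\tilde I>0$; (A2) $\tilde E>(\gamma/\delta)\tilde I$; (A3) $\tilde S>\delta\tilde E/(\beta\tilde I)$; (A4) $\tilde R\ge 0$ and $N>\tilde S e^{(\beta/\gamma)\tilde R}+\tilde R$. Let $\alpha$ be the unique solution in $(\tilde R,N)$ of $x=N-\tilde S e^{(\beta/\gamma)\tilde R}e^{-(\beta/\gamma)x}$, and assume (A5) $\tilde S<(\gamma/\beta)e^{(\beta/\gamma)(\alpha-\tilde R)}$. Put $u_0:=e^{-(\beta/\gamma)\tilde R}$, $u_\infty:=e^{-(\beta/\gamma)\alpha}$. Let $\psi$ be the unique function, continuous and positive on $(u_\infty,u_0]$ and $C^1$ on $(u_\infty,u_0)$, satisfying $\psi'(u)\psi(u)-\frac{\gamma+\delta}{u}\psi(u)=-\delta\,\frac{\beta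 N-\beta\tilde S e^{(\beta/\gamma)\tilde R}u+\gamma\log u}{u}$ on $(u_\infty,u_0)$ and $\psi(u_0)=\beta\tilde I$. Let $\varphi(u):=\int_u^{u_0}\frac{d\xi}{\xi\psi(\xi)}$; $\varphi$ is a strictly decreasing continuous bijection from $(u_\infty,u_0]$ onto $[0,\infty)$, with inverse $\varphi^{-1}:[0,\infty)\to(u_\infty,u_0]$. *)

(* Defs.v *)
From Stdlib Require Import Reals.
From Coquelicot Require Import Coquelicot.
Open Scope R_scope.

Definition phi_of (psi : R -> R) (u0 u : R) : R :=
  RInt (fun xi => / (xi * psi xi)) u u0.

(* Main.v *)
Require Import Defs.
From Stdlib Require Import Reals Lra.
From Coquelicot Require Import Coquelicot.
From Stdlib Require Import ssreflect.
Open Scope R_scope.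

Section L.
Variables (psi : R -> R) (a u0 : R).
Hypothesis Ha : 0 <= a.
Hypothesis Hau : a < u0.
Hypothesis Hpos : forall u, a < u <= u0 -> 0 < psi u.
Hypothesis Hcont : forall u, a < u < u0 -> continuous psi u.
Hypothesis Hleft : filterlim psi (at_left u0) (locally (psi u0)).

Let f := fun xi => / (xi * psi xi).
Let h := fun xi => f (Rmin xi u0).

Lemma left_lim : filterlim f (at_left u0) (locally (f u0)).
Proof.
  have Hm : filterlim (fun xi => xi * psi xi) (at_left u0) (locally (u0 * psi u0)).
  { apply (filterlim_comp_2 (G:=locally u0) (H:=locally (psi u0)) (fun x => x) psi Rmult).
    - intros P HP. unfold filtermap, at_left, within.
      apply: filter_imp HP. intros; auto.
    - exact Hleft.
    - apply (filterlim_mult (K:=R_AbsRing)). }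
  unfold f. apply (filterlim_comp _ _ _ (fun xi => xi * psi xi) Rinv _ _ _ Hm).
  apply continuous_Rinv.
  have := Hpos u0. have : 0 < u0 by lra. intros; apply Rgt_not_eq; apply Rmult_lt_0_compat; auto; apply H0; lra.
Qed.

Lemma h_cont z : a < z <= u0 -> continuous h z.
Proof.
  intros [Hz1 Hz2]. destruct (Rle_lt_or_eq_dec _ _ Hz2) as [Hlt|Heq].
  - apply continuous_ext_loc with f.
    + exists (mkposreal _ (Rlt_Rminus _ _ Hlt)). intros y Hy.
      unfold h. rewrite Rmin_left //.
      move: Hy; rewrite /ball /= /AbsRing_ball /abs /minus /plus /opp /=. 
      move=> Hy. apply Rabs_def2 in Hy. lra.
    + unfold f. apply continuous_Rinv_comp.
      * apply (continuous_mult (K:=R_AbsRing) (fun x => x) psi).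
        apply continuous_id. apply Hcont. lra.
      * apply Rgt_not_eq; apply Rmult_lt_0_compat. lra. apply Hpos; lra.
  - subst z. unfold continuous. apply/filterlim_locally => eps.
    have H : at_left u0 (fun x => ball (f u0) eps (f x)) by apply (proj1 (filterlim_locally _ _) left_lim eps).
    unfold at_left, within. eapply filter_imp; [|exact H].
    intros x Hx. unfold h. rewrite (Rmin_left u0 u0) ?Rle_refl //.
    destruct (Rlt_or_le x u0) as [Hl|Hl].
    + rewrite Rmin_left; [|lra]. auto.
    + rewrite Rmin_right //. apply ball_center.
Qed.

Lemma phi_eq x : a < x <= u0 -> phi_of psi u0 x = RInt h x u0.
Proof.
  intros Hx. unfold phi_of. apply RInt_ext. intros z Hz.
  rewrite Rmin_left in Hz; [|lra]. rewrite Rmax_right in Hz; [|lra].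
  unfold h. rewrite Rmin_left //. lra.
Qed.

Lemma exh x y : a < x -> x <= y -> y <= u0 -> ex_RInt h x y.
Proof.
  intros. apply (ex_RInt_continuous (V:=R_CompleteNormedModule)). intros z Hz.
  rewrite Rmin_left in Hz; [|lra]. rewrite Rmax_right in Hz; [|lra].
  apply h_cont. lra.
Qed.

Lemma phi_strict x y : a < x -> x < y -> y <= u0 -> phi_of psi u0 y < phi_of psi u0 x.
Proof.
  intros. rewrite (phi_eq x); [|lra]. rewrite (phi_eq y); [|lra].
  rewrite -(RInt_Chasles h x y u0); try (apply exh; lra).
  have : 0 < RInt h x y.
  { apply RInt_gt_0; auto.
    - intros z Hz. unfold h, f. rewrite Rmin_left; [|lra].
      apply Rinv_0_lt_compat, Rmult_lt_0_compat. lra. apply Hpos; lra.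
    - intros z Hz. apply h_cont; lra. }
  rewrite /plus /=. lra.
Qed.

Lemma phi_mono x y : a < x -> x <= y -> y <= u0 -> phi_of psi u0 y <= phi_of psi u0 x.
Proof.
  intros. destruct (Rle_lt_or_eq_dec _ _ H0) as [H2|H2].
  - left; apply phi_strict; auto.
  - subst; lra.
Qed.
End L.
Theorem theorem8
  (beta gamma delta St Et It Rt alpha : R) (psi phiinv : R -> R)
  (Hbeta : 0 < beta) (Hgamma : 0 < gamma) (Hdelta : 0 < delta)
  (HN : 0 < St + Et + It + Rt)
  (A1 : 0 < It)
  (A2 : Et > (gamma / delta) * It)
  (A3 : St > delta * Et / (beta * It))
  (A4a : 0 <= Rt)
  (A4b : St + Et + It + Rt > St * exp ((beta / gamma) * Rt) + Rt)
  (Halpha_int : Rt < alpha < St + Et + It + Rt)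
  (Halpha_eq : alpha = (St + Et + It + Rt)
                       - St * exp ((beta / gamma) * Rt) * exp (- (beta / gamma) * alpha))
  (A5 : St < (gamma / beta) * exp ((beta / gamma) * (alpha - Rt)))
  (* psi: continuous and positive on (u_inf, u0], C^1 on (u_inf, u0),
     solving the ODE there, with psi(u0) = beta * It *)
  (Hpsi_pos : forall u, exp (- (beta / gamma) * alpha) < u <= exp (- (beta / gamma) * Rt) ->
                        0 < psi u)
  (Hpsi_cont : forall u, exp (- (beta / gamma) * alpha) < u < exp (- (beta / gamma) * Rt) ->
                         continuous psi u)
  (Hpsi_cont_u0 : filterlim psi (at_left (exp (- (beta / gamma) * Rt)))
                            (locally (psi (exp (- (beta / gamma) * Rt)))))
  (Hpsi_C1 : forall u, exp (- (beta / gamma) * alpha) < u < exp (- (beta / gamma) * Rt) ->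
                       ex_derive psi u /\ continuous (Derive psi) u)
  (Hpsi_ode : forall u, exp (- (beta / gamma) * alpha) < u < exp (- (beta / gamma) * Rt) ->
      Derive psi u * psi u - (gamma + delta) / u * psi u
      = - delta * (beta * (St + Et + It + Rt)
                   - beta * St * exp ((beta / gamma) * Rt) * u + gamma * ln u) / u)
  (Hpsi_u0 : psi (exp (- (beta / gamma) * Rt)) = beta * It)
  (* phiinv is the inverse of phi : (u_inf, u0] -> [0, oo) *)
  (Hphiinv : forall t, 0 <= t ->
      exp (- (beta / gamma) * alpha) < phiinv t <= exp (- (beta / gamma) * Rt) /\
      phi_of psi (exp (- (beta / gamma) * Rt)) (phiinv t) = t) :
  let S := fun t => St * exp ((beta / gamma) * Rt) * phiinv t in
  exists Rinf Sinf : R,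
    is_lim (fun t => - (gamma / beta) * ln (phiinv t)) p_infty Rinf /\
    is_lim S p_infty Sinf /\
    Sinf = St * exp ((beta / gamma) * Rt) * exp (- (beta / gamma) * Rinf) /\
    (forall s t, 0 <= s -> s < t -> S t < S s) /\
    (forall t, 0 <= t ->
       St >= S t /\ S t > St * exp ((beta / gamma) * Rt) * exp (- (beta / gamma) * alpha)) /\
    St * exp ((beta / gamma) * Rt) * exp (- (beta / gamma) * alpha) = Sinf.
Proof.
  intros S.
  set b := beta / gamma.
  set ui := exp (- b * alpha).
  set u0 := exp (- b * Rt).
  set C := St * exp (b * Rt).
  have Hb : 0 < b by apply Rdiv_lt_0_compat.
  have HEt : 0 < Et.
  { apply Rlt_trans with (gamma / delta * It); auto.
    apply Rmult_lt_0_compat; auto; apply Rdiv_lt_0_compat; auto. }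
  have HSt : 0 < St.
  { apply Rlt_trans with (delta * Et / (beta * It)); auto.
    apply Rdiv_lt_0_compat; apply Rmult_lt_0_compat; auto. }
  have HC : 0 < C by apply Rmult_lt_0_compat; [auto| apply exp_pos].
  have Hui : 0 < ui by apply exp_pos.
  have Hiu : ui < u0.
  { apply exp_increasing. have := Rmult_lt_compat_l b _ _ Hb (proj1 Halpha_int). lra. }
  have Hmono : forall x y, ui < x -> x <= y -> y <= u0 -> phi_of psi u0 y <= phi_of psi u0 x.
  { intros x y Hx Hxy Hy. apply (phi_mono psi ui u0); auto; lra. }
  have Lp : filterlim phiinv (Rbar_locally p_infty) (locally ui).
  { apply/filterlim_locally => eps.
    set v := Rmin (ui + eps / 2) u0.
    have Hv1 : ui < v.
    { unfold v. apply Rmin_glb_lt; auto. have := cond_pos eps. lra. }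
    have Hv2 : v <= u0 by apply Rmin_r.
    have Hv3 : v <= ui + eps / 2 by apply Rmin_l.
    exists (Rmax 0 (phi_of psi u0 v)). intros t Ht.
    have Ht0 : 0 <= t. { have := Rmax_l 0 (phi_of psi u0 v). lra. }
    have Ht1 : phi_of psi u0 v < t. { have := Rmax_r 0 (phi_of psi u0 v). lra. }
    destruct (Hphiinv t Ht0) as [[Hp1 Hp2] Hp3]. change (exp (- (beta / gamma) * alpha)) with ui in *; change (exp (- (beta / gamma) * Rt)) with u0 in *.
    have Hlt : phiinv t < v.
    { destruct (Rlt_or_le (phiinv t) v) as [H|H]; auto.
      have := Hmono v (phiinv t) Hv1 H Hp2. rewrite Hp3. intro; lra. }
    rewrite /ball /= /AbsRing_ball /abs /minus /plus /opp /=.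
    have := cond_pos eps. intro. apply Rabs_def1; lra. }
  exists alpha, (C * ui). split; [|split; [|split; [|split; [|split]]]].
  - have Ha : alpha = - (gamma / beta) * ln ui.
    { unfold ui. rewrite ln_exp. unfold b. field. lra. }
    unfold is_lim. simpl. rewrite Ha.
    apply (filterlim_comp _ _ _ phiinv (fun u => - (gamma / beta) * ln u) _ _ _ Lp).
    apply (continuous_mult (K:=R_AbsRing) (fun _ => - (gamma / beta)) ln).
    apply continuous_const. apply continuous_ln; auto.
  - unfold is_lim. simpl.
    apply (filterlim_comp _ _ _ phiinv (fun u => C * u) _ _ _ Lp).
    apply (continuous_mult (K:=R_AbsRing) (fun _ => C) (fun u => u)).
    apply continuous_const. apply continuous_id.
  - reflexivity.
  - intros s t Hs Hst.
    destruct (Hphiinv s Hs) as [[Hs1 Hs2] Hs3]. change (exp (- (beta / gamma) * alpha)) with ui in *; change (exp (- (beta / gamma) * Rt)) with u0 in *.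
    have Ht : 0 <= t by lra.
    destruct (Hphiinv t Ht) as [[Ht1 Ht2] Ht3]. change (exp (- (beta / gamma) * alpha)) with ui in *; change (exp (- (beta / gamma) * Rt)) with u0 in *.
    unfold S. fold b. fold C. apply Rmult_lt_compat_l; auto.
    destruct (Rlt_or_le (phiinv t) (phiinv s)) as [H|H]; auto.
    have := Hmono (phiinv s) (phiinv t) Hs1 H Ht2. lra.
  - intros t Ht. destruct (Hphiinv t Ht) as [[Ht1 Ht2] Ht3]. change (exp (- (beta / gamma) * alpha)) with ui in *; change (exp (- (beta / gamma) * Rt)) with u0 in *.
    unfold S. fold b. fold C. fold ui. split.
    + have : C * u0 = St.
      { unfold C, u0. rewrite Rmult_assoc -exp_plus.
        replace (b * Rt + - b * Rt) with 0 by ring. rewrite exp_0. ring. }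
      have := Rmult_le_compat_l C _ _ (Rlt_le _ _ HC) Ht2. lra.
    + apply Rmult_lt_compat_l; auto.
  - reflexivity.
Qed.
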